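(* Let $q$ be a prime power, $\mathbb{L}=\mathrm{GF}(q^m)$, $n\mid q^m-1$, and $F_n=\{f\in\mathbb{L}^n : f_{qi\bmod n}=f_i^q\ \forall i\in\mathbb{Z}/n\mathbb{Z}\}$. For $g\in\mathbb{L}^n$ and each $q$-cyclotomic class $C=\{c,qc,\ldots,q^{|C|-1}c\}$ modulo $n$ (with chosen leader $c$), put $x_{C,t}=(g_{q^tc})^{q^{m-t}}$ for $t=0,\ldots,|C|-1$. Then $$\min_{f\in F_n}|\mathrm{supp}(g-f)|=\sum_{C}\Big(|C|-\max_{b\in\mathrm{GF}(q^{|C|})}\#\{t : x_{C,t}=b\}\Big),$$ the sum running over all $q$-cyclotomic classes modulo $n$.
   Context: $\mathrm{supp}(h)=\{i : h_i\neq0\}$. The $q$-cyclotomic class of $s\in\mathbb{Z}/n\mathbb{Z}$ is $\{s,qs,q^2s,\ldots\}\bmod n$. $\mathrm{GF}(q^\ell)$ for $\ell\mid m$ is the unique subfield of $\mathbb{L}$ of that size. *)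

(* Defs.v *)
From mathcomp Require Import all_boot all_order all_algebra all_field.
Set Implicit Arguments. Unset Strict Implicit. Unset Printing Implicit Defensive.
Import GRing.Theory.
Local Open Scope ring_scope.

(* The index k mod n, as an element of 'I_n (n > 0 is witnessed by i : 'I_n). *)
Definition ord_mod (n : nat) (i : 'I_n) (k : nat) : 'I_n :=
  Ordinal (@ltn_pmod k n (leq_ltn_trans (leq0n i) (ltn_ord i))).

Definition prime_power (q : nat) : Prop :=
  exists p k : nat, prime p /\ (0 < k)%N /\ q = (p ^ k)%N.

Definition supp (L : fieldType) (n : nat) (h : 'I_n -> L) : {set 'I_n} :=
  [set i | h i != 0].

Definition Fn (L : fieldType) (q n : nat) (f : 'I_n -> L) : Prop :=
  forall i : 'I_n, f (ord_mod i (q * i)) = f i ^+ q.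

(* q-cyclotomic class of c modulo n: { q^t c mod n : t >= 0 }.
   Ranging t over 'I_n suffices: the sequence q^t c mod n takes all its
   values among its first n terms. *)
Definition cyc_class (q n : nat) (c : 'I_n) : {set 'I_n} :=
  [set ord_mod c (q ^ t * c) | t : 'I_n].

Definition cyc_classes (q n : nat) : {set {set 'I_n}} :=
  [set cyc_class q c | c : 'I_n].

Definition xCt (L : fieldType) (q m n : nat) (g : 'I_n -> L) (c : 'I_n) (t : nat) : L :=
  g (ord_mod c (q ^ t * c)) ^+ (q ^ (m - t)).

(* GF(q^l) as the subfield {b : b^(q^l) = b} of L *)
Definition in_GF (L : fieldType) (q l : nat) (b : L) : bool := b ^+ (q ^ l) == b.

Definition class_term (L : finFieldType) (q m n : nat) (g : 'I_n -> L)
  (C : {set 'I_n}) (c : 'I_n) : nat :=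
  (#|C| - \max_(b : L | in_GF q #|C| b) #|[set t : 'I_#|C| | xCt q m g c t == b]|)%N.

(* Main.v *)
Require Import Defs.
From mathcomp Require Import all_boot all_order all_algebra all_field.
From mathcomp Require Import zify.
Set Implicit Arguments. Unset Strict Implicit. Unset Printing Implicit Defensive.
Import GRing.Theory.
Local Open Scope ring_scope.

Definition sig (q n : nat) (i : 'I_n) : 'I_n := ord_mod i (q * i).

Lemma iter_sig_val q n (c : 'I_n) t :
  val (iter t (@sig q n) c) = ((q ^ t * c) %% n)%N.
Proof.
elim: t => [|t IH] /=.
  by rewrite expn0 mul1n modn_small.
rewrite IH /= modnMmr expnS mulnA.
by [].
Qed.

Lemma ord_mod_iter q n (c : 'I_n) t : ord_mod c (q ^ t * c) = iter t (@sig q n) c.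
Proof. by apply: val_inj; rewrite iter_sig_val. Qed.

Lemma iter_mod (T : Type) (f : T -> T) x p t :
  iter p f x = x -> iter t f x = iter (t %% p) f x.
Proof.
move=> hp; rewrite {1}(divn_eq t p) addnC iterD; congr (iter _ f _).
elim: (t %/ p)%N => [|j IH]; first by rewrite mul0n.
by rewrite mulSn iterD IH hp.
Qed.

Lemma expr_mod (L : fieldType) (b : L) q k t :
  b ^+ (q ^ k) = b -> b ^+ (q ^ t) = b ^+ (q ^ (t %% k)).
Proof.
move=> hb; rewrite {1}(divn_eq t k) expnD exprM; congr (_ ^+ _).
elim: (t %/ k)%N => [|j IH]; first by rewrite mul0n expn0 expr1.
by rewrite mulSn expnD exprM hb IH.
Qed.

Lemma order_le_card (n : nat) (f : 'I_n -> 'I_n) x : (order f x <= n)%N.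
Proof. by rewrite /order; apply: leq_trans (max_card _) _; rewrite card_ord. Qed.

Lemma cyc_class_eq q n (c : 'I_n) :
  cyc_class q c = [set y | fconnect (@sig q n) c y].
Proof.
apply/setP => y; rewrite inE; apply/imsetP/idP.
  by move=> [t _ ->]; rewrite ord_mod_iter fconnect_iter.
move=> H.
have hlt : (findex (@sig q n) c y < n)%N.
  exact: leq_trans (findex_max H) (order_le_card _ _).
exists (Ordinal hlt) => //.
by rewrite ord_mod_iter /= iter_findex.
Qed.

Lemma card_cyc_class q n (c : 'I_n) : #|cyc_class q c| = order (@sig q n) c.
Proof. by rewrite cyc_class_eq /order cardsE. Qed.

Lemma class_mem q n (C : {set 'I_n}) (y : 'I_n) :
  injective (@sig q n) -> C \in cyc_classes q n ->
  (y \in C) = (cyc_class q y == C).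
Proof.
move=> inj /imsetP [c _ ->].
rewrite !cyc_class_eq inE.
apply/idP/eqP.
  move=> H; apply/setP => z; rewrite !inE.
  apply: same_connect; first exact: (fconnect_sym inj).
  by rewrite (fconnect_sym inj).
move=> /setP /(_ y); rewrite !inE connect0 => H.
by rewrite -H.
Qed.

Lemma count_class q n (c : 'I_n) k (P : pred 'I_n) :
  k = order (@sig q n) c ->
  #|[set y | fconnect (@sig q n) c y & P y]| = #|[set t : 'I_k | P (iter t (@sig q n) c)]|.
Proof.
move=> hk.
have inj : injective (fun t : 'I_k => iter t (@sig q n) c).
  move=> t1 t2 /(congr1 (findex (@sig q n) c)).
  by rewrite !findex_iter -?hk //; move=> h; apply: val_inj.
rewrite -(card_imset _ inj); apply: eq_card => y.
apply/idP/imsetP.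
  rewrite inE => /andP [H Py].
  have hlt : (findex (@sig q n) c y < k)%N by rewrite hk findex_max.
  exists (Ordinal hlt); last by rewrite /= iter_findex.
  by rewrite inE /= iter_findex.
by move=> [t]; rewrite inE => Pt ->; rewrite inE fconnect_iter.
Qed.
Lemma class_count (L : finFieldType) q m n (g F : 'I_n -> L) (c : 'I_n) k (b : L) :
  (forall x : L, x ^+ (q ^ m) = x) ->
  k = order (@sig q n) c -> (k <= m)%N ->
  (forall t, (t < k)%N -> F (iter t (@sig q n) c) = b ^+ (q ^ t)) ->
  #|[set y in cyc_class q c | g y != F y]| =
    (k - #|[set t : 'I_k | xCt q m g c t == b]|)%N.
Proof.
move=> hfrob hk hkm hF.
rewrite cyc_class_eq.
have -> : [set y in [set y | fconnect (@sig q n) c y] | g y != F y] =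
          [set y | fconnect (@sig q n) c y & g y != F y].
  by apply/setP => y; rewrite !inE.
rewrite (count_class _ hk).
have -> : [set t : 'I_k | g (iter t (@sig q n) c) != F (iter t (@sig q n) c)] =
          ~: [set t : 'I_k | xCt q m g c t == b].
  apply/setP => t; rewrite !inE hF // /xCt ord_mod_iter; congr negb.
  have htm : (t <= m)%N by apply: ltnW; apply: leq_trans (ltn_ord t) hkm.
  apply/eqP/eqP.
    by move=> ->; rewrite -exprM -expnD subnKC // hfrob.
  by move=> H; rewrite -H -exprM -expnD subnK // hfrob.
by rewrite cardsCs setCK card_ord.
Qed.

Lemma Fn_iter (L : fieldType) q n (f : 'I_n -> L) (c : 'I_n) t :
  Fn q f -> f (iter t (@sig q n) c) = f c ^+ (q ^ t).
Proof.
move=> hf; elim: t => [|t IH]; first by rewrite expn0 expr1.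
rewrite iterS; have := hf (iter t (@sig q n) c); rewrite /sig => ->.
by rewrite IH -exprM -expnSr.
Qed.

Unset Implicit Arguments.
Set Strict Implicit.

Theorem theorem9p4 (L : finFieldType) (q m n : nat)
  (hq : prime_power q) (hm : (0 < m)%N) (hL : #|L| = (q ^ m)%N)
  (hn : (n %| q ^ m - 1)%N)
  (leader : {set 'I_n} -> 'I_n)
  (hleader : forall C, C \in cyc_classes q n -> leader C \in C)
  (g : 'I_n -> L) :
  let S := (\sum_(C in cyc_classes q n) class_term q m g C (leader C))%N in
  (exists f : 'I_n -> L, Fn q f /\ #|supp (fun i => (g i - f i)%R)| = S) /\
  (forall f : 'I_n -> L, Fn q f -> (S <= #|supp (fun i => (g i - f i)%R)|)%N).
Proof.
move=> S.
have hq0 : (0 < q)%N.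
  rewrite lt0n; apply/negP => /eqP q0; move: hL; rewrite q0 exp0n // => hL0.
  have : (0 < #|L|)%N by apply/card_gt0P; exists 0.
  by rewrite hL0.
have hfrob : forall x : L, x ^+ (q ^ m) = x by move=> x; rewrite -hL expf_card.
have hmod : ((q ^ m) %% n = 1 %% n)%N.
  have h1 : (0 < q ^ m)%N by rewrite expn_gt0 hq0.
  by rewrite -(subnK h1) -modnDml (eqP hn) add0n.
have hper : forall i : 'I_n, iter m (@sig q n) i = i.
  move=> i; apply: val_inj; rewrite iter_sig_val /= -modnMml hmod modnMml mul1n.
  by rewrite modn_small.
have inj : injective (@sig q n).
  apply: (can_inj (g := iter m.-1 (@sig q n))) => i.
  by rewrite -iterSr prednK // hper.
have hord : forall c, (order (@sig q n) c <= m)%N.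
  move=> c; rewrite /order.
  apply: (leq_trans (subset_leq_card
     (_ : fconnect (@sig q n) c \subset [set iter (val t) (@sig q n) c | t : 'I_m]))).
    apply/subsetP => y hy; apply/imsetP.
    exists (Ordinal (ltn_pmod (findex (@sig q n) c y) hm)) => //=.
    by rewrite -(iter_mod _ (hper c)) iter_findex.
  by apply: leq_trans (leq_imset_card _ _) _; rewrite card_ord.
have hCl : forall C, C \in cyc_classes q n -> cyc_class q (leader C) = C.
  by move=> C hC; apply/eqP; rewrite -class_mem // hleader.
have hsupp : forall f : 'I_n -> L, #|supp (fun i => g i - f i)| =
    (\sum_(C in cyc_classes q n) #|[set y in C | g y != f y]|)%N.
  move=> f; rewrite /supp -sum1_card.
  rewrite (partition_big (fun i => cyc_class q i) (mem (cyc_classes q n))) /=; last first.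
    by move=> i _; apply: imset_f.
  apply: eq_bigr => C hC; rewrite -sum1_card; apply: eq_bigl => y.
  by rewrite !inE subr_eq0 (class_mem _ inj hC) andbC.
split; last first.
  move=> f hf; rewrite hsupp /S; apply: leq_sum => C hC.
  have hc := hleader C hC; have hCc := hCl C hC.
  move: (leader C) hc hCc => c hc hCc; subst C.
  rewrite /class_term (@class_count L q m n g f c #|cyc_class q c| (f c) hfrob
     (card_cyc_class _ _)); last 2 first.
  - by rewrite card_cyc_class hord.
  - by move=> t _; rewrite Fn_iter.
  apply: leq_sub2l; apply: (leq_bigmax_cond (f c)).
  by rewrite /in_GF -Fn_iter // card_cyc_class iter_order.
have hGF0 : forall k, in_GF q k (0 : L).
  by move=> k; rewrite /in_GF expr0n expn_eq0 eqn0Ngt hq0.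
pose bC (C : {set 'I_n}) : L :=
  [arg max_(b > 0 | in_GF q #|C| b) #|[set t : 'I_#|C| | xCt q m g (leader C) t == b]|].
have hbC : forall C : {set 'I_n}, in_GF q #|C| (bC C) /\
   (\max_(b | in_GF q #|C| b) #|[set t : 'I_#|C| | xCt q m g (leader C) t == b]|
     = #|[set t : 'I_#|C| | xCt q m g (leader C) t == bC C]|)%N.
  move=> C; rewrite /bC; case: (arg_maxnP _ (hGF0 #|C|)) => b hb hmax.
  split => //; apply/eqP; rewrite eqn_leq (leq_bigmax_cond b hb) andbT.
  by apply/bigmax_leqP => b' hb'; apply: hmax.
pose f (i : 'I_n) : L :=
  bC (cyc_class q i) ^+ (q ^ findex (@sig q n) (leader (cyc_class q i)) i).
have hfi : forall C, C \in cyc_classes q n -> forall t,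
    f (iter t (@sig q n) (leader C)) = bC C ^+ (q ^ t).
  move=> C hC t.
  have hcC : cyc_class q (iter t (@sig q n) (leader C)) = C.
    rewrite -[in RHS](hCl C hC); apply/eqP.
    by rewrite -class_mem ?imset_f // cyc_class_eq inE fconnect_iter.
  rewrite /f hcC (iter_mod _ (iter_order inj (leader C))) findex_iter; last first.
    by rewrite ltn_pmod // order_gt0.
  have [hb _] := hbC C.
  symmetry; apply: expr_mod.
  by rewrite -(card_cyc_class q (leader C)) (hCl C hC); apply/eqP.
exists f; split.
  move=> i.
  have hC : cyc_class q i \in cyc_classes q n by apply: imset_f.
  have hi : fconnect (@sig q n) (leader (cyc_class q i)) i.
    have h1 := hCl _ hC.
    have : i \in cyc_class q (leader (cyc_class q i)).
      by rewrite h1 cyc_class_eq inE connect0.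
    by rewrite cyc_class_eq inE.
  have := iter_findex hi.
  move: (findex _ _ _) => j hj.
  rewrite -hj.
  change (f (iter j.+1 (@sig q n) (leader (cyc_class q i))) =
          f (iter j (@sig q n) (leader (cyc_class q i))) ^+ q).
  by rewrite !hfi // -exprM -expnSr.
rewrite hsupp /S; apply: eq_bigr => C hC.
have hc := hleader C hC; have hCc := hCl C hC; have hf' := hfi C hC.
have [_ hmx] := hbC C.
move: (bC C) hf' hmx => b hf' hmx.
move: (leader C) hc hCc hf' hmx => c hc hCc hf' hmx; subst C.
rewrite /class_term hmx (@class_count L q m n g f c #|cyc_class q c| b hfrob
     (card_cyc_class _ _)) //.
all: first [by rewrite card_cyc_class hord | by move=> t _; rewrite hf'].
Qed.
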